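(* Let $G=(V,E)$ be a finite, simple, connected $K_w$-minor-free graph and $U\subseteq V$ with $|U|\ge\max(w,4)$. Let $a\in U$ be a $U$-good node with witnessing set $U_a$ and write $\epsilon=\epsilon_U$. Then for every $b\in U_a$ there exist at least $\lceil\epsilon(|U|-2)\rceil$ nodes $c\in U$ such that, for each of them, for at least $\lceil\epsilon(|U|-3)\rceil$ nodes $d\in U$ the set $\{(a,b),(c,d)\}$ is a good quadruple.
   Context: The interval $I(u,v)$ is the set of nodes on at least one shortest $u$–$v$ path in $G$. A quadruple in $U$ is a set $\{(a,b),(c,d)\}$ of two unordered pairs with $a,b,c,d\in U$ distinct; it is good if $I(a,b)\cap I(c,d)\ne\emptyset$. Let $q(U)$ and $q_{\mathrm{good}}(U)$ be the numbers of quadruples and good quadruples in $U$, and $\epsilon_U=q_{\mathrm{good}}(U)/(8q(U))$. A node $a\in U$ is $U$-good if there is a subset $U_a\subseteq U$ (a witnessing set) of size at least $\lceil 4\epsilon_U(|U|-1)\rceil$ such that for every $b\in U_a$ the number of pairs $c,d\in U$ for which $\{(a,b),(c,d)\}$ is a good quadruple is at least $\lceil 4\epsilon_U\binom{|U|-2}{2}\rceil$. *)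

(* Defs.v *)
From HB Require Import structures.
From mathcomp Require Import all_boot all_order all_algebra.
From mathcomp Require Import boolp.
Set Implicit Arguments.
Unset Strict Implicit.
Unset Printing Implicit Defensive.
Import Order.TTheory GRing.Theory Num.Theory.

Section Graphs.
Variable T : finType.
Variable e : rel T.

Definition simple_graph : Prop := symmetric e /\ irreflexive e.

Definition graph_connected : Prop := forall x y : T, connect e x y.

Definition connected_set (S : {set T}) : Prop :=
  forall x y, x \in S -> y \in S ->
    connect [rel u v | [&& e u v, u \in S & v \in S]] x y.

Definition has_Kminor (w : nat) : Prop :=
  exists B : 'I_w -> {set T},
    [/\ forall i, B i != set0,
        forall i, connected_set (B i),
        forall i j, i != j -> [disjoint B i & B j] &
        forall i j, i != j -> exists x y, [/\ x \in B i, y \in B j & e x y]].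

Definition Kminor_free (w : nat) : Prop := ~ has_Kminor w.

(* walks from u: sequences p with u :: p an e-path; length = size p *)
Definition walk (u v : T) (p : seq T) : Prop := path e u p /\ last u p = v.

Definition shortest_walk (u v : T) (p : seq T) : Prop :=
  walk u v p /\ forall q, walk u v q -> size p <= size q.

Definition interval (u v : T) : {set T} :=
  [set x | `[< exists p, shortest_walk u v p /\ x \in u :: p >]].

Definition distinct4 (a b c d : T) : bool :=
  [&& a != b, a != c, a != d, b != c, b != d & c != d].

Definition quad_of (a b c d : T) : {set {set T}} := [set [set a; b]; [set c; d]].

Definition is_quad (U : {set T}) (Q : {set {set T}}) : bool :=
  [exists a in U, exists b in U, exists c in U, exists d in U,
     distinct4 a b c d && (Q == quad_of a b c d)].

Definition is_good_quad (U : {set T}) (Q : {set {set T}}) : bool :=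
  `[< exists a b c d, [&& a \in U, b \in U, c \in U, d \in U,
         distinct4 a b c d, Q == quad_of a b c d &
         interval a b :&: interval c d != set0] >].

Definition q (U : {set T}) : nat := #|[set Q | is_quad U Q]|.
Definition q_good (U : {set T}) : nat := #|[set Q | is_good_quad U Q]|.

Definition epsU (U : {set T}) : rat := (q_good U)%:R / (8 * q U)%:R.

Definition good_pairs (U : {set T}) (a b : T) : nat :=
  #|[set P : {set T} | [exists c in U, exists d in U,
       (P == [set c; d]) && is_good_quad U (quad_of a b c d)]]|.

Definition witnessing_set (U : {set T}) (a : T) (Ua : {set T}) : Prop :=
  [/\ a \in U, Ua \subset U,
      (Num.ceil (4 * epsU U * (#|U| - 1)%N%:R) <= (#|Ua|)%:Z)%R &
      forall b, b \in Ua ->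
        (Num.ceil (4 * epsU U * ('C(#|U| - 2, 2))%N%:R) <= (good_pairs U a b)%:Z)%R].

Definition U_good (U : {set T}) (a : T) : Prop := exists Ua, witnessing_set U a Ua.

End Graphs.

(* Main.v *)
Require Import Defs.
From HB Require Import structures.
From mathcomp Require Import all_boot all_order all_algebra.
From mathcomp Require Import boolp.
From mathcomp Require Import ring lra zify.
Import Order.TTheory GRing.Theory Num.Theory.

Section Aux.
Variables (T : finType) (e : rel T).

Lemma pair_sub (U X Y : {set T}) (a b c d : T) :
  [disjoint X & Y] -> X \subset U -> Y \subset U ->
  [set a; b] = X -> [set c; d] = Y -> #|X| = 2 -> #|Y| = 2 ->
  [&& a \in U, b \in U, c \in U, d \in U & distinct4 a b c d].
Proof.
move=> dXY sXU sYU eX eY cX cY.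
have aX : a \in X by rewrite -eX !inE eqxx.
have bX : b \in X by rewrite -eX !inE eqxx orbT.
have cY' : c \in Y by rewrite -eY !inE eqxx.
have dY : d \in Y by rewrite -eY !inE eqxx orbT.
have nab : a != b by move: cX; rewrite -eX cards2; case: (a != b).
have ncd : c != d by move: cY; rewrite -eY cards2; case: (c != d).
have nxy : forall x y, x \in X -> y \in Y -> x != y.
  by move=> x y xX yY; apply/eqP => exy; move: yY; rewrite -exy (disjointFr dXY xX).
rewrite (subsetP sXU _ aX) (subsetP sXU _ bX) (subsetP sYU _ cY') (subsetP sYU _ dY).
by rewrite /distinct4 nab ncd !nxy.
Qed.

Lemma good_inv (U : {set T}) (a b c d : T) :
  is_good_quad e U (quad_of a b c d) ->
  [&& a \in U, b \in U, c \in U, d \in U & distinct4 a b c d].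
Proof.
move/asboolP => [a' [b' [c' [d']]]] /and5P [a'U b'U c'U d'U /and3P [dis /eqP eQ _]].
set A := [set a'; b']; set C := [set c'; d'].
move: dis; rewrite /distinct4 => /and5P [n1 n2 n3 n4 /andP [n5 n6]].
have dAC : [disjoint A & C].
  rewrite disjoints_subset; apply/subsetP => x; rewrite !inE.
  by case/orP => /eqP ->; rewrite negb_or ?n2 ?n3 ?n4 ?n5.
have sAU : A \subset U by apply/subsetP => x; rewrite !inE; case/orP => /eqP ->.
have sCU : C \subset U by apply/subsetP => x; rewrite !inE; case/orP => /eqP ->.
have cA : #|A| = 2 by rewrite cards2 n1.
have cC : #|C| = 2 by rewrite cards2 n6.
have nAC : A != C.
  apply/eqP => eAC; have : a' \in C by rewrite -eAC !inE eqxx.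
  by rewrite !inE (negbTE n2) (negbTE n3).
have AB : [set a; b] \in quad_of a' b' c' d' by rewrite -eQ !inE eqxx.
have CD : [set c; d] \in quad_of a' b' c' d' by rewrite -eQ !inE eqxx orbT.
have A' : A \in quad_of a b c d by rewrite eQ !inE eqxx.
have C' : C \in quad_of a b c d by rewrite eQ !inE eqxx orbT.
rewrite !inE in AB CD A' C'.
case/orP: AB => /eqP eAB; case/orP: CD => /eqP eCD.
- rewrite eAB eCD orbb in C'; by rewrite eq_sym (negbTE nAC) in C'.
- exact: pair_sub dAC sAU sCU eAB eCD cA cC.
- by apply: pair_sub _ sCU sAU eAB eCD cC cA; rewrite disjoint_sym.
- rewrite eAB eCD orbb in A'; by rewrite (negbTE nAC) in A'.
Qed.

Lemma good_ab (U : {set T}) (a b c d : T) :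
  (c == a) || (c == b) || (a == b) -> is_good_quad e U (quad_of a b c d) = false.
Proof.
move=> H; apply/negP => /good_inv /and5P [_ _ _ _].
rewrite /distinct4 => /and5P [n1 n2 _ n4 /andP [_ _]].
by case/orP: H => [/orP [] | ] /eqP E; move: n1 n2 n4; rewrite E eqxx ?andbF.
Qed.

End Aux.

Theorem mainTheorem8 (T : finType) (e : rel T) (w : nat) (U Ua : {set T}) (a : T) :
  simple_graph e -> graph_connected e -> Kminor_free e w ->
  maxn w 4 <= #|U| ->
  witnessing_set e U a Ua ->
  forall b, b \in Ua ->
    (Num.ceil (epsU e U * (#|U| - 2)%N%:R) <=
      #|[set c in U |
          (Num.ceil (epsU e U * (#|U| - 3)%N%:R) <=
            #|[set d in U | is_good_quad e U (quad_of a b c d)]|%:Z)%R]|%:Z)%R.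
Proof.
move=> _ _ _ HN [aU UaU _ Hgp] b bUa.
have N4 : (4 <= #|U|)%N by move: HN; rewrite geq_max => /andP [].
have bU : b \in U := subsetP UaU b bUa.
have eps0 : (0 <= epsU e U)%R by rewrite /epsU divr_ge0 // ler0n.
have H1 := Hgp b bUa.
rewrite ceil_le_int -pmulrn in H1.
rewrite ceil_le_int -pmulrn.
set eps := epsU e U in H1 eps0 *.
set deg := fun c => #|[set d in U | is_good_quad e U (quad_of a b c d)]|.
set S := [set c in U | _].
set gp := good_pairs e U a b in H1.
have C0 : (0 < 'C(#|U| - 2, 2))%N by rewrite bin_gt0; lia.
have [eab | nab] := eqVneq a b.
  have gp0 : gp = 0%N.
    apply/eqP; rewrite cards_eq0; apply/eqP/setP => P; rewrite !inE.
    apply/negbTE/existsP => [[c /andP [_ /existsP [d /andP [_ /andP [_]]]]]].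
    by rewrite good_ab // eab eqxx !orbT.
  rewrite gp0 in H1.
  have Cp : (0 < 4 * ('C(#|U| - 2, 2))%:R :> rat)%R by rewrite mulr_gt0 // ltr0n.
  have : (eps * (4 * ('C(#|U| - 2, 2))%:R) <= 0)%R by rewrite mulrA [(eps * 4)%R]mulrC.
  rewrite pmulr_lle0 // => {}H1.
  have -> : eps = 0%R by apply/le_anti; rewrite H1 eps0.
  by rewrite mul0r ler0n.
have U2b : b \in U :\ a by rewrite !inE eq_sym nab bU.
set U2 := U :\ a :\ b.
have cU2 : #|U2| = (#|U| - 2)%N.
  have := cardsD1 a U; have := cardsD1 b (U :\ a); rewrite aU U2b /= -/U2; lia.
have dega : deg a = 0%N.
  apply/eqP; rewrite cards_eq0; apply/eqP/setP => d; rewrite !inE good_ab ?eqxx ?orbT ?andbF //.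
have degb : deg b = 0%N.
  apply/eqP; rewrite cards_eq0; apply/eqP/setP => d; rewrite !inE good_ab ?eqxx ?orbT ?andbF //.
have Hsum : (gp <= \sum_(c in U) deg c)%N.
  have -> : (\sum_(c in U) deg c = #|[set p : T * T | (p.1 \in U) &&
       ((p.2 \in U) && is_good_quad e U (quad_of a b p.1 p.2))]|)%N.
    rewrite -sum1_card.
    rewrite (eq_bigl (fun p : T * T => (p.1 \in U) && ((p.2 \in U) &&
       is_good_quad e U (quad_of a b p.1 p.2)))); last by move=> p; rewrite inE.
    rewrite -(pair_big_dep (fun c => c \in U)
       (fun c d => (d \in U) && is_good_quad e U (quad_of a b c d)) (fun _ _ => 1%N)).
    apply: eq_bigr => c _; rewrite /deg -sum1_card; apply: eq_bigl => d; rewrite inE.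
    done.
  apply: leq_trans (leq_imset_card (fun p : T * T => [set p.1; p.2]) _).
  apply: subset_leq_card; apply/subsetP => P; rewrite inE.
  move=> /existsP [c /andP [cU /existsP [d /andP [dU /andP [/eqP -> g]]]]].
  by apply/imsetP; exists (c, d) => //; rewrite inE cU dU g.
have Hsum2 : (\sum_(c in U) deg c = \sum_(c in U2) deg c)%N.
  by rewrite (big_setD1 a aU) (big_setD1 b U2b) dega degb.
have Hdeg : forall c, c \in U2 -> (deg c <= #|U| - 3)%N.
  move=> c cinU2; have : (deg c <= #|U2 :\ c|)%N.
    apply: subset_leq_card; apply/subsetP => d; rewrite !inE => /andP [dU g].
    move/good_inv: g => /and5P [_ _ _ _]; rewrite /distinct4.
    move=> /and5P [_ _ n3 _ /andP [n5 n6]].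
    by rewrite ![d == _]eq_sym n3 n5 n6 dU.
  by have := cardsD1 c U2; rewrite cU2 cinU2 /=; lia.
set n3 : rat := (((#|U| - 3)%N)%:R)%R.
set n2 : rat := (((#|U| - 2)%N)%:R)%R.
have Hreal : (((\sum_(c in U2) deg c)%N)%:R <= #|S|%:R * n3 + eps * n3 * n2 :> rat)%R.
  rewrite natr_sum (big_setID S) /=.
  apply: lerD.
  - apply: (@le_trans _ _ (\sum_(c in U2 :&: S) n3)%R).
    + apply: ler_sum => c; rewrite in_setI => /andP [cU2' _].
      by rewrite ler_nat; exact: Hdeg.
    + rewrite sumr_const -[(n3 *+ _)%R]mulr_natl ler_wpM2r ?ler0n // ler_nat.
      by apply: subset_leq_card; apply: subsetIr.
  - apply: (@le_trans _ _ (\sum_(c in U2 :\: S) (eps * n3))%R).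
    + apply: ler_sum => c; rewrite in_setD => /andP [nS cU2'].
      have cU : c \in U by move: cU2'; rewrite !inE => /andP [_ /andP [_]].
      rewrite inE cU /= -ltNge ceil_gt_int -pmulrn in nS.
      exact: ltW.
    + rewrite sumr_const -[((eps * n3) *+ _)%R]mulr_natl mulrC ler_wpM2l ?(mulr_ge0 eps0 (ler0n _ _)) // /n2 ler_nat -cU2.
      by apply: subset_leq_card; apply: subsetDl.
have Cid : (('C(#|U| - 2, 2))%:R * 2 = n2 * n3 :> rat)%R.
  have := bin_ffact (#|U| - 2) 2; rewrite ffactnS ffactn1 /= => h.
  rewrite /n2 /n3 -!natrM; congr (GRing.natmul _ _).
  rewrite h; congr (_ * _)%N; lia.
have Hg : (gp%:R <= ((\sum_(c in U2) deg c)%N)%:R :> rat)%R by rewrite ler_nat -Hsum2.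
have E : (4 * eps * ('C(#|U| - 2, 2))%:R = 2 * (eps * (n2 * n3)) :> rat)%R.
  by rewrite -Cid; ring.
have E2 : (eps * n3 * n2 = eps * (n2 * n3) :> rat)%R by ring.
have n3p : (0 < n3)%R by rewrite ltr0n; lia.
have : (0 <= (#|S|%:R - eps * n2) * n3)%R.
  have -> : ((#|S|%:R - eps * n2) * n3 = #|S|%:R * n3 - eps * (n2 * n3) :> rat)%R by ring.
  rewrite E E2 in H1 Hreal; lra.
by rewrite pmulr_lge0 // subr_ge0.
Qed.
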